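(* Let $A$ be a non-trivial (i.e. $A\neq\{0\}$) commutative Banach algebra, let $a\in A$, $c\in\mathbb C$, and let $M=cI+M_a$, where $M_a\in L(A)$ is the multiplication operator $M_ab=ab$. Then the operator $M\oplus M$ on $A\oplus A$ is not cyclic.
   Context: A Banach algebra is a complex algebra, possibly without unit, with a complete submultiplicative norm. An operator $T\in L(X)$ on a topological vector space $X$ is cyclic if there is $x\in X$ such that the linear span of $\{T^nx:n\ge 0\}$ is dense in $X$. *)

(* Defs.v *)
From HB Require Import structures.
From mathcomp Require Import all_boot all_order all_algebra.
From mathcomp Require Import all_classical all_reals all_analysis.
From mathcomp Require Import complex.
Set Implicit Arguments. Unset Strict Implicit. Unset Printing Implicit Defensive.
Import Order.TTheory GRing.Theory Num.Theory.
Local Open Scope classical_set_scope.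
Local Open Scope ring_scope.

Definition orbit_span (K : numDomainType) (V : lmodType K) (T : V -> V) (x : V)
  : set V :=
  [set y | exists (n : nat) (l : 'I_n -> K), y = \sum_(k < n) l k *: iter k T x].

Definition cyclic_op (K : numDomainType) (V : tvsType K) (T : V -> V) : Prop :=
  exists x : V, closure (orbit_span T x) = setT.

(* mul makes the (complete) normed space A a commutative (possibly non-unital)
   Banach algebra over K: associative, commutative, bilinear (linearity in the
   first argument + commutativity), with submultiplicative norm. Completeness is
   carried by the type A : completeNormedModType K. *)
Definition comm_banach_algebra (K : numFieldType) (A : completeNormedModType K)
  (mul : A -> A -> A) : Prop :=
  [/\ forall x y z, mul x (mul y z) = mul (mul x y) z,
      forall x y, mul x y = mul y x,
      forall (k : K) x y z, mul (k *: x + y) z = k *: mul x z + mul y z &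
      forall x y, `|mul x y| <= `|x| * `|y| ].

(* Main.v *)
Require Import Defs.
From HB Require Import structures.
From mathcomp Require Import all_boot all_order all_algebra.
From mathcomp Require Import all_classical all_reals all_analysis.
From mathcomp Require Import complex.
Import Order.TTheory GRing.Theory Num.Theory.
Local Open Scope classical_set_scope.
Local Open Scope ring_scope.
Local Open Scope complex_scope.

Section H.
Context (R : realType) (A : completeNormedModType R[i]) (mul : A -> A -> A)
  (hA : comm_banach_algebra mul).

Lemma mulDl x y z : mul (x + y) z = mul x z + mul y z.
Proof. move: hA; rewrite /comm_banach_algebra => -[_ _ L _]; by have := L 1 x y z; rewrite !scale1r. Qed.
Lemma mul0l z : mul 0 z = 0.
Proof.
have := mulDl 0 0 z; rewrite addr0 => /(congr1 (fun t => t - mul 0 z)).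
by rewrite subrr addrK => h; rewrite -h.
Qed.
Lemma mulZl k x z : mul (k *: x) z = k *: mul x z.
Proof. by move: hA; rewrite /comm_banach_algebra => -[_ _ L _]; rewrite -[k *: x]addr0 L mul0l addr0. Qed.
Lemma mulBl x y z : mul (x - y) z = mul x z - mul y z.
Proof. by rewrite mulDl -scaleN1r mulZl scaleN1r. Qed.
Lemma mulC x y : mul x y = mul y x.
Proof. by move: hA; rewrite /comm_banach_algebra => -[]. Qed.
Lemma mulA x y z : mul x (mul y z) = mul (mul x y) z.
Proof. by move: hA; rewrite /comm_banach_algebra => -[]. Qed.
Lemma mul_norm x y : `|mul x y| <= `|x| * `|y|.
Proof. by move: hA; rewrite /comm_banach_algebra => -[]. Qed.

Lemma mul_cont z : continuous (fun u => mul u z).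
Proof.
move=> u; apply: (proj2 (cvgrPdist_lt _ _)) => e e0.
have n1 : 0 < `|z| + 1 by rewrite ltr_wpDl.
have := @cvgr_dist_lt _ _ _ _ _ id u (cvg_id) (e / (`|z| + 1)) (divr_gt0 e0 n1).
move=> H; have {}H := H (nbhs_filter u); near=> v.
rewrite -mulBl (le_lt_trans (mul_norm _ _)) //.
rewrite (@le_lt_trans _ _ (`|u - v| * (`|z| + 1))) //.
  by rewrite ler_wpM2l // lerDl.
by rewrite -ltr_pdivlMr //; near: v; exact: H.
Unshelve. all: by end_near.
Qed.


Lemma mulCl x y z : mul (mul x y) z = mul (mul x z) y.
Proof. by rewrite -mulA (mulC y z) mulA. Qed.

Lemma fst_cont : continuous (fst : A * A -> A).
Proof. move=> p; exact: cvg_fst. Qed.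
Lemma snd_cont : continuous (snd : A * A -> A).
Proof. move=> p; exact: cvg_snd. Qed.

Lemma closed0 (V : normedModType R[i]) (g : A * A -> V) :
  continuous g -> closed [set p | g p = 0].
Proof.
move=> hg; apply: (proj1 (continuous_closedP g) hg [set 0]).
exact/accessible_closed_set1/hausdorff_accessible/norm_hausdorff.
Qed.

Lemma contC1 (x y : A) : continuous (fun p : A * A => mul p.1 y - mul p.2 x).
Proof.
move=> p; apply: cvgB.
  exact: (continuous_comp (fst_cont p) (mul_cont y p.1)).
exact: (continuous_comp (snd_cont p) (mul_cont x p.2)).
Qed.

Lemma contC2 (x y : A) : continuous (fun p : A * A => (`|p.1| * `|y| - `|p.2| * `|x| : R[i]^o)).
Proof.
move=> p; apply: cvgB; apply: cvgMl.
  apply: cvg_norm; exact: fst_cont.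
apply: cvg_norm; exact: snd_cont.
Qed.
End H.

Arguments mulDl {R A mul} hA.
Arguments mul0l {R A mul} hA.
Arguments mulZl {R A mul} hA.
Arguments mulC {R A mul} hA.
Arguments mulA {R A mul} hA.
Arguments contC1 {R A mul} hA.
Arguments closed0 {R A V g}.
Arguments contC2 {R A}.
Arguments fst_cont {R A}.

Theorem proposition1p4 (R : realType) (A : completeNormedModType R[i])
  (mul : A -> A -> A) (hA : comm_banach_algebra mul)
  (nontriv : exists x : A, x != 0) (a : A) (c : R[i]) :
  let M := fun b : A => c *: b + mul a b in
  ~ cyclic_op (fun p : (A * A)%type => (M p.1, M p.2)).
Proof.
move=> M [[x y] hcl].
set T := fun p : (A * A)%type => (M p.1, M p.2).
have iterT k : iter k T (x, y) = (iter k M x, iter k M y).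
  by elim: k => //= k ->.
have orbit_ind (P : set (A * A)) : P 0 -> (forall p q, P p -> P q -> P (p + q)) ->
    (forall k (l : R[i]), P (l *: iter k T (x, y))) -> orbit_span T (x, y) `<=` P.
  move=> P0 PD PZ p [n [l ->]]; apply: big_ind => //.
have key (C : set (A * A)) q : closed C -> orbit_span T (x, y) `<=` C -> ~ C q -> False.
  move=> cC sub nq; apply: nq.
  have := closureS sub; rewrite -(closure_id C).1 // hcl; exact.
have MC b w : mul (M b) w = mul b (M w).
  rewrite /M /= [RHS](mulC hA) !(mulDl hA) !(mulZl hA) (mulC hA w b); congr (_ + _).
  by rewrite -!(mulA hA) (mulC hA w b).
have MI k b w : mul (iter k M b) w = mul b (iter k M w).
  elim: k b w => //= k IH b w.
  by rewrite MC IH -iterSr.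
have C1 : orbit_span T (x, y) `<=` [set p | mul p.1 y - mul p.2 x = 0].
  apply: orbit_ind => /=.
  - by rewrite !(mul0l hA) subrr.
  - move=> [p1 p2] [q1 q2] /= h1 h2.
    by rewrite !(mulDl hA) opprD addrACA h1 h2 addr0.
  - move=> k l; rewrite iterT /= !(mulZl hA) -scalerBr MI (mulC hA x).
    by rewrite subrr scaler0.
have cC1 := closed0 (contC1 hA x y).
case: (pselect (forall z, mul x z = 0)) => hx; last first.
  move/existsNP: hx => [z hz]; apply: (key _ (0, z) cC1 C1) => /=.
  by rewrite (mul0l hA) sub0r => /eqP; rewrite oppr_eq0 (mulC hA z) => /eqP.
case: (pselect (forall z, mul y z = 0)) => hy; last first.
  move/existsNP: hy => [z hz]; apply: (key _ (z, 0) cC1 C1) => /=.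
  by rewrite (mul0l hA) subr0 (mulC hA z).
have Ms s b : (forall z, mul b z = 0) -> M (s *: b) = c *: (s *: b).
  by move=> hb; rewrite /M (mulC hA a) (mulZl hA) hb scaler0 addr0.
have iM k b : (forall z, mul b z = 0) -> iter k M b = c ^+ k *: b.
  move=> hb; elim: k => [|k IH]; first by rewrite /= scale1r.
  rewrite iterS IH Ms //. by rewrite exprS -scalerA.
have S : orbit_span T (x, y) `<=` [set p | exists s, p = (s *: x, s *: y)].
  apply: orbit_ind.
  - by exists 0; rewrite !scale0r.
  - by move=> p q [s1 ->] [s2 ->]; exists (s1 + s2); rewrite !scalerDl.
  - move=> k l; rewrite iterT !iM //; exists (l * c ^+ k).
    by rewrite -!scalerA.
case: (nontriv) => e e0.
case: (eqVneq x 0) => [x0|x0].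
  apply: (key [set p | p.1 = 0] (e, 0)).
  - exact: (closed0 fst_cont).
  - by move=> p /S [s ->]; rewrite x0 scaler0.
  - by move=> /= h; rewrite h eqxx in e0.
apply: (key [set p | (`|p.1| * `|y| - `|p.2| * `|x| : R[i]^o) = 0] (0, x)).
- exact: (closed0 (contC2 x y)).
- move=> p /S [s ->] /=; rewrite !normrZ -!mulrA (mulrC `|x|) subrr //.
- move=> /= /eqP; rewrite normr0 mul0r sub0r oppr_eq0 mulf_eq0 orbb normr_eq0.
  by rewrite (negbTE x0).
Qed.
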